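(* Let $G$ be a gap-free finite simple graph, $s\geq1$, and $e_1,\dots,e_s$ edges of $G$ (repetitions allowed). Then the graph $G'$ associated to $(I(G)^{s+1}:e_1\cdots e_s)^{\mathrm{pol}}$ is gap-free.
   Context: $S=K[x_1,\dots,x_n]$ with the $x_i$ the vertices of $G$; $I(G)=(xy: xy\text{ an edge})$; edges identified with monomials; $(J:m)=\{f: fm\in J\}$; the ideal $J=(I(G)^{s+1}:e_1\cdots e_s)$ is generated by quadratic monomials. Polarization: $J^{\mathrm{pol}}\subseteq K[x_1,\dots,x_n,x_1',\dots,x_n']$ is generated by all $x_ix_j$ ($i\ne j$) with $x_ix_j\in J$ and all $x_kx_k'$ with $x_k^2\in J$. The associated graph $G'$ has vertex set $V(G)\cup\{x_k' : x_k^2\in J\}$ and edge set $\{x_ix_j : i\neq j, x_ix_j\in J\}\cup\{x_kx_k' : x_k^2\in J\}$, so $I(G')=J^{\mathrm{pol}}$. Two vertex-disjoint edges $uv$, $xy$ form a gap in a graph if there is no edge with one endpoint in $\{u,v\}$ and the other in $\{x,y\}$; a graph is gap-free if it has no gap. *)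

(* Defs.v *)
From mathcomp Require Import all_boot.
Set Implicit Arguments. Unset Strict Implicit. Unset Printing Implicit Defensive.

(* A finite simple graph G on vertex set T (a finType)
   is a symmetric irreflexive relation [e : rel T].  Monomials in
   K[x_t : t in T] are exponent vectors {ffun T -> nat}. *)

Definition monom (T : finType) := {ffun T -> nat}.

Definition mone (T : finType) : monom T := [ffun => 0%N].

Definition mmul (T : finType) (m1 m2 : monom T) : monom T :=
  [ffun x => m1 x + m2 x].

Definition mdvd (T : finType) (m1 m2 : monom T) : bool :=
  [forall x, m1 x <= m2 x].

Definition mquad (T : finType) (u v : T) : monom T :=
  [ffun x => ((x == u) + (x == v))%N].

Definition medges (T : finType) (es : seq (T * T)) : monom T :=
  foldr (fun p acc => mmul (mquad p.1 p.2) acc) (mone T) es.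

Definition all_edges (T : finType) (e : rel T) (es : seq (T * T)) : bool :=
  all (fun p => e p.1 p.2) es.

(* m belongs to the monomial ideal I(G)^k, i.e. m is divisible by a product
   of k edges of G (repetitions allowed), these products being the monomial
   generators of I(G)^k. *)
Definition in_edge_pow (T : finType) (e : rel T) (k : nat) (m : monom T) : Prop :=
  exists es : seq (T * T), [/\ size es = k, all_edges e es & mdvd (medges es) m].

Definition in_colon (T : finType) (e : rel T) (k : nat) (f m : monom T) : Prop :=
  in_edge_pow e k (mmul m f).

(* membership of a quadratic monomial x_i x_j in J = (I(G)^{s+1} : e_1...e_s),
   where es = [e_1; ...; e_s] and s = size es *)
Definition inJ (T : finType) (e : rel T) (es : seq (T * T)) (i j : T) : Prop :=
  in_colon e (size es).+1 (medges es) (mquad i j).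

(* Its vertices live in T + T:
   inl x = x, inr x = x' (the new variable, a vertex only when x^2 in J). *)
Definition Gpol_edge (T : finType) (e : rel T) (es : seq (T * T))
  (a b : T + T) : Prop :=
  match a, b with
  | inl i, inl j => i <> j /\ inJ e es i j
  | inl k, inr k' => k = k' /\ inJ e es k k
  | inr k', inl k => k = k' /\ inJ e es k k
  | inr _, inr _ => False
  end.

Definition Gpol_vertex (T : finType) (e : rel T) (es : seq (T * T))
  (a : T + T) : Prop :=
  match a with inl _ => True | inr k => inJ e es k k end.

Definition is_gap (V : Type) (E : V -> V -> Prop) (u v x y : V) : Prop :=
  [/\ E u v, E x y,
      [/\ u <> x, u <> y, v <> x & v <> y] &
      [/\ ~ E u x, ~ E u y, ~ E v x & ~ E v y]].

Definition gap_free (V : Type) (E : V -> V -> Prop) : Prop :=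
  forall u v x y, ~ is_gap E u v x y.

(* Main.v *)
Require Import Defs.
From mathcomp Require Import all_boot.
From mathcomp Require Import zify.
From Stdlib Require Import Classical_Prop.
Set Implicit Arguments. Unset Strict Implicit. Unset Printing Implicit Defensive.

Lemma medges_nil (T : finType) z : medges (T:=T) [::] z = 0.
Proof. by rewrite /medges /= /mone ffunE. Qed.

Lemma medges_cons (T : finType) (p : T * T) U z :
  medges (p :: U) z = ((z == p.1) + (z == p.2)) + medges U z.
Proof. by rewrite /medges /= /mmul ffunE /mquad ffunE. Qed.

Lemma medges_cat (T : finType) (U V : seq (T*T)) z :
  medges (U ++ V) z = medges U z + medges V z.
Proof.
elim: U => [|p U IH]; first by rewrite medges_nil.
by rewrite /= !medges_cons IH addnA.
Qed.

Lemma medges_count (T : finType) (U : seq (T*T)) z :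
  medges U z = \sum_(p <- U) ((z == p.1) + (z == p.2)).
Proof.
elim: U => [|p U IH]; first by rewrite medges_nil big_nil.
by rewrite medges_cons big_cons IH.
Qed.

Lemma medges_perm (T : finType) (U V : seq (T*T)) z :
  perm_eq U V -> medges U z = medges V z.
Proof. by move=> H; rewrite !medges_count (perm_big _ H). Qed.

Lemma sum_eq1 (T : finType) (u : T) : \sum_(z : T) (z == u : nat) = 1.
Proof.
rewrite (bigD1 u) //= eqxx big1 // => i /negbTE -> //.
Qed.

Lemma deg_medges (T : finType) (U : seq (T*T)) :
  \sum_(z : T) medges U z = 2 * size U.
Proof.
elim: U => [|p U IH].
  by rewrite big1 // => z _; rewrite medges_nil.
under eq_bigr => z _ do rewrite medges_cons.
rewrite big_split /= big_split /= IH !sum_eq1 /=. lia.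
Qed.

Lemma dvd_eq (T : finType) (f g : T -> nat) :
  (forall z, f z <= g z) -> \sum_(z : T) f z = \sum_(z:T) g z -> forall z, f z = g z.
Proof.
move=> Hle Hs z; apply/eqP; rewrite eqn_leq Hle /=; rewrite leqNgt; apply/negP => Hlt.
move: Hs; rewrite (bigD1 z) //= [X in _ = X](bigD1 z) //=.
have : \sum_(i | i != z) f i <= \sum_(i | i != z) g i by apply: leq_sum.
lia.
Qed.

Lemma has_endpoint (T : finType) (U : seq (T*T)) x :
  0 < medges U x -> exists p, p \in U /\ (x = p.1 \/ x = p.2).
Proof.
elim: U => [|p U IH]; first by rewrite medges_nil.
rewrite medges_cons.
case: (eqVneq x p.1) => [->|h1]; first by exists p; rewrite mem_head; auto.
case: (eqVneq x p.2) => [->|h2]; first by exists p; rewrite mem_head; auto.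
rewrite /= add0n => /IH [q [Hq Hx]]; exists q; rewrite inE Hq orbT; auto.
Qed.


Fixpoint pw (T : finType) (e : rel T) (x y : T) (U : seq (T*T)) : Prop :=
  match U with
  | [::] => x = y
  | q :: U' => exists u v, (q = (u,v) \/ q = (v,u)) /\ e x u /\ pw e v y U'
  end.

Definition walk (T : finType) (e : rel T) (x y : T) (U : seq (T*T)) : Prop :=
  exists t, pw e x t U /\ e t y.

Definition sub (T : finType) (U es : seq (T*T)) : Prop :=
  forall p, count_mem p U <= count_mem p es.

Lemma pw_cat (T : finType) (e : rel T) U V x y :
  pw e x y (U ++ V) <-> exists z, pw e x z U /\ pw e z y V.
Proof.
elim: U x => [|q U IH] x /=.
  split; [by exists x | by case=> z [-> ]].
split.
  case=> u [v [Hq [Hxu /IH [z [H1 H2]]]]]; exists z; split => //; by exists u, v.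
case=> z [[u [v [Hq [Hxu H1]]]] H2]; exists u, v; split => //; split => //.
by apply/IH; exists z.
Qed.

Lemma walk_cat (T : finType) (e : rel T) U V x y :
  walk e x y (U ++ V) <-> exists z, pw e x z U /\ walk e z y V.
Proof.
split.
  case=> t [/pw_cat [z [H1 H2]] H3]; exists z; split => //; by exists t.
case=> z [H1 [t [H2 H3]]]; exists t; split => //; apply/pw_cat; by exists z.
Qed.

Lemma walk_cons (T : finType) (e : rel T) g U x y :
  walk e x y (g :: U) <-> exists u v, (g = (u,v) \/ g = (v,u)) /\ e x u /\ walk e v y U.
Proof.
split.
  case=> t [[u [v [Hg [Hxu Hp]]]] Ht]; exists u, v; split => //; split => //; by exists t.
case=> u [v [Hg [Hxu [t [Hp Ht]]]]]; exists t; split => //; by exists u, v.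
Qed.

Lemma pw_rev (T : finType) (e : rel T) (e_sym : symmetric e) P c y z :
  pw e c y P -> e y z -> walk e z c (rev P).
Proof.
elim: P c => [|q P IH] c /=.
  move=> -> Hyz; exists z; split => //; by rewrite e_sym.
case=> u [v [Hq [Hcu Hp]]] Hyz.
case: (IH _ Hp Hyz) => t [H1 H2].
rewrite rev_cons -cats1; exists u; split; last by rewrite e_sym.
apply/pw_cat; exists t; split => //=.
exists v, u; split; first by case: Hq => ->; auto.
by split.
Qed.

Lemma walk_head (T : finType) (e : rel T) (e_sym : symmetric e) c d U :
  walk e c d U -> exists q, e c q /\ (forall x, e x q -> walk e x d U) /\
    exists V, perm_eq V U /\ pw e d q V.
Proof.
case: U => [|g U] /=.
  case=> t [-> Htd]; exists d; split => //; split.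
    by move=> x Hx; exists x.
  by exists [::].
case=> t [[u [v [Hg [Hcu Hp]]]] Ht].
exists u; split => //; split.
  by move=> x Hx; exists t; split => //; exists u, v.
exists (rcons (rev U) g); split.
  by rewrite perm_rcons perm_cons perm_rev.
case: (pw_rev e_sym Hp Ht) => t' [H1 H2].
rewrite -cats1; apply/pw_cat; exists t'; split => //=.
exists v, u; split; first by case: Hg => ->; auto.
by split.
Qed.


Lemma inJE (T : finType) (e : rel T) es x y :
  inJ e es x y <-> exists ES, [/\ size ES = (size es).+1, all_edges e ES &
     forall z, medges ES z <= (z == x) + (z == y) + medges es z].
Proof.
rewrite /inJ /in_colon /in_edge_pow /mdvd.
split; case=> ES [H1 H2 H3]; exists ES; split => //.
  by move=> z; move/forallP: H3 => /(_ z); rewrite /mmul /mquad !ffunE.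
by apply/forallP => z; rewrite /mmul /mquad !ffunE.
Qed.

Lemma sub_rest (T : finType) (U es : seq (T*T)) :
  sub U es -> exists rest, perm_eq es (U ++ rest).
Proof.
elim: U es => [|q U IH] es Hs; first by exists es.
have Hq : q \in es.
  by rewrite -has_pred1 has_count; move: (Hs q) => /=; rewrite eqxx; lia.
have Hp := perm_to_rem Hq.
have : sub U (rem q es).
  move=> p; move: (Hs p) => /=; move/permP: Hp => /(_ (pred1 p)) /= ->.
  case: (p == q) => /=; lia.
case/IH => rest Hr; exists rest.
by apply: (perm_trans Hp); rewrite /= perm_cons.
Qed.

Lemma pw_edges (T : finType) (e : rel T) x t U :
  pw e x t U -> exists WE, [/\ size WE = size U, all_edges e WE &
    forall z, medges WE z + (z == t) = (z == x) + medges U z].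
Proof.
elim: U x => [|q U IH] x /=.
  by move=> ->; exists [::]; split => // z; rewrite !medges_nil addnC.
case=> u [v [Hq [Hxu Hp]]].
case: (IH _ Hp) => WE [H1 H2 H3].
exists ((x,u) :: WE); split => /=; first by rewrite H1.
  by rewrite Hxu.
move=> z; rewrite !medges_cons /=.
have := H3 z.
case: Hq => -> /=; rewrite /mmul /mquad !ffunE /=; lia.
Qed.

Lemma soundness (T : finType) (e : rel T) es x y U :
  all_edges e es -> walk e x y U -> sub U es -> inJ e es x y.
Proof.
move=> Hes [t [Hp Hty]] Hs.
case: (pw_edges Hp) => WE [H1 H2 H3].
case: (sub_rest Hs) => rest Hr.
apply/inJE; exists ((t,y) :: WE ++ rest); split.
- by rewrite /= size_cat H1 (perm_size Hr) size_cat.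
- rewrite /all_edges /= Hty /= all_cat; apply/andP; split => //.
  move: Hes; rewrite /all_edges (perm_all _ Hr) all_cat => /andP [] //.
- move=> z; rewrite medges_cons medges_cat (medges_perm z Hr) medges_cat /=.
  have := H3 z; lia.
Qed.

Lemma comp_step (T : finType) (e : rel T) (e_sym : symmetric e)
  es ES x y : size ES = (size es).+1 -> all_edges e ES ->
  (forall z, medges ES z = (z == x) + (z == y) + medges es z) ->
  e x y \/ exists q u v es' ES', perm_eq es (q :: es') /\ (q = (u,v) \/ q = (v,u)) /\
     e x u /\ size ES' = (size es').+1 /\ all_edges e ES' /\
     forall z, medges ES' z = (z == v) + (z == y) + medges es' z.
Proof.
move=> HSZ HES Heq.
have Hx : 0 < medges ES x by rewrite Heq eqxx.
case: (has_endpoint Hx) => p [Hp Hxp].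
have HPp := perm_to_rem Hp.
move: HPp; set ES' := rem p ES => HPp.
have [u [Hxu Hm]] : exists u, e x u /\ forall z, medges ES z = (z == x) + (z == u) + medges ES' z.
  move: HES; rewrite /all_edges (perm_all _ HPp) /= => /andP [He _].
  case: Hxp => ->; [exists p.2 | exists p.1]; (split; [by rewrite // e_sym | move=> z]);
  rewrite (medges_perm z HPp) medges_cons //; by rewrite (addnC (z == p.1)).
have HES' : all_edges e ES' by move: HES; rewrite /all_edges (perm_all _ HPp) /= => /andP [].
have HSZ' : size ES' = size es.
  by move: HSZ; rewrite (perm_size HPp) /= => -[].
have Hc : forall z, (z == u) + medges ES' z = (z == y) + medges es z.
  move=> z; move: (Hm z) (Heq z) => -> ; rewrite -!addnA => /eqP; rewrite eqn_add2l => /eqP //.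
case: (eqVneq u y) => [Huy|Huy]; first by left; rewrite -Huy.
right.
have Hu : 0 < medges es u by move: (Hc u); rewrite eqxx (negbTE Huy) /= add0n => <-.
case: (has_endpoint Hu) => q [Hq Huq].
have HPq := perm_to_rem Hq.
move: HPq; set es' := rem q es => HPq.
have [v [Hqv Hm2]] : exists v, (q = (u,v) \/ q = (v,u)) /\
   forall z, medges es z = (z == u) + (z == v) + medges es' z.
  case: Huq => ->; [exists q.2 | exists q.1]; (split; [ by case: (q); auto | ]);
  move=> z; rewrite (medges_perm z HPq) medges_cons //.
  by rewrite (addnC (z == q.2)).
exists q, u, v, es', ES'.
split; first exact: HPq. split; first exact: Hqv. split; first exact: Hxu.
split; first by rewrite HSZ' (perm_size HPq).
split; first exact: HES'.
move=> z; move: (Hc z); rewrite Hm2; lia.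


Qed.

Lemma completeness_n (T : finType) (e : rel T) (e_sym : symmetric e) n :
  forall es ES x y, size es = n -> size ES = n.+1 -> all_edges e ES ->
  (forall z, medges ES z = (z == x) + (z == y) + medges es z) ->
  exists U, walk e x y U /\ sub U es.
Proof.
elim: n => [|n IH] es ES x y Hsz HSZ HES Heq.
  have := comp_step e_sym (etrans HSZ (congr1 S (esym Hsz))) HES Heq.
  case=> [Hxy|[q [u [v [es' [ES' [Hp _]]]]]]].
    by exists [::]; split => //; exists x.
  by move: (perm_size Hp); rewrite Hsz.
have := comp_step e_sym (etrans HSZ (congr1 S (esym Hsz))) HES Heq.
case=> [Hxy|[q [u [v [es' [ES' [Hp [Hq [Hxu [HS' [HE' Heq']]]]]]]]]]].
  by exists [::]; split => //; exists x.
have Hsz' : size es' = n by move: (perm_size Hp); rewrite Hsz /= => -[].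
case: (IH es' ES' v y Hsz' (etrans HS' (congr1 S Hsz')) HE' Heq') => U [HU HsU].
exists (q :: U); split.
  apply/walk_cons; exists u, v; split => //.
move=> p'; move: (HsU p'); move/permP: Hp => /(_ (pred1 p')) /= ->.
by rewrite leq_add2l.
Qed.

Lemma completeness (T : finType) (e : rel T) (e_sym : symmetric e)
  (e_irr : irreflexive e) es x y :
  inJ e es x y -> exists U, walk e x y U /\ sub U es.
Proof.
case/inJE => ES [H1 H2 H3].
apply: (completeness_n e_sym (erefl (size es)) H1 H2).
apply: dvd_eq => //.
rewrite deg_medges H1 big_split big_split /= !sum_eq1 deg_medges; lia.
Qed.

Lemma inJ_sym (T : finType) (e : rel T) es x y : inJ e es x y -> inJ e es y x.
Proof.
case/inJE => ES [H1 H2 H3]; apply/inJE; exists ES; split => // z.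
by have := H3 z; lia.
Qed.


Lemma sub_le (T : finType) (W V es : seq (T*T)) :
  (forall p, count_mem p W <= count_mem p V) -> sub V es -> sub W es.
Proof. by move=> H1 H2 p; apply: leq_trans (H1 p) (H2 p). Qed.

Lemma scan (T : finType) (e : rel T) (e_sym : symmetric e) es a b c d U2 :
  walk e c d U2 ->
  forall post pre y, pw e a y pre -> walk e y b post -> sub (pre ++ post) es ->
  sub (pre ++ U2) es ->
  sub (pre ++ post ++ U2) es \/
  exists W, sub W es /\ (walk e a c W \/ walk e a d W).
Proof.
move=> HU2; elim=> [|g post IH] pre y Hpre Hwalk Hs1 Hs2; first by left.
case/walk_cons: Hwalk => u [v [Hg [Hyu Hv]]].
case: (classic (sub ((pre ++ [:: g]) ++ U2) es)) => Hsg.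
  have Hpre' : pw e a v (pre ++ [:: g]).
    apply/pw_cat; exists y; split => //=; exists u, v; split => //.
  have Hs1' : sub ((pre ++ [:: g]) ++ post) es by rewrite -catA.
  case: (IH _ _ Hpre' Hv Hs1' Hsg) => [H|H]; last by right.
  by left; rewrite -catA in H.
have Hgin : g \in U2.
  apply: NNPP => Hn; apply: Hsg => p.
  have Hc0 : count_mem g U2 = 0.
    by apply/eqP; rewrite -leqn0 leqNgt -has_count has_pred1; apply/negP.
  move: (Hs2 p) (Hs1 p); rewrite !count_cat /=.
  case: (eqVneq g p) => [<-|/negbTE Hne] /=; rewrite ?eqxx ?Hne ?Hc0 /=; lia.
move: HU2 Hs2; case/splitPr: Hgin => pre2 post2 HU2 Hs2.
case/walk_cat: HU2 => y2 [Hp2 /walk_cons [u2 [v2 [Hg2 [Hy2 Hw2]]]]].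
have [same|opp] : (u = u2 /\ v = v2) \/ (u = v2 /\ v = u2).
  by case: Hg => Hg; case: Hg2 => Hg2; rewrite Hg in Hg2; case: Hg2 => -> ->; auto.
- right; exists (pre ++ g :: post2); split.
    apply: sub_le Hs2 => p; rewrite !count_cat /=; lia.
  right; apply/walk_cat; exists y; split => //.
  apply/walk_cons; exists u, v; split => //; split => //.
  by case: same => _ ->.
- right; exists (pre ++ g :: rev pre2); split.
    apply: sub_le Hs2 => p; rewrite !count_cat /= count_rev; lia.
  left; apply/walk_cat; exists y; split => //.
  apply/walk_cons; exists u, v; split => //; split => //.
  case: opp => _ ->.
  exact: (pw_rev e_sym Hp2 Hy2).
Qed.


Lemma core (T : finType) (e : rel T) (e_sym : symmetric e) (e_irr : irreflexive e)
  (G_gap_free : gap_free (fun u v : T => e u v)) es (es_edges : all_edges e es)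
  a b c d : inJ e es a b -> inJ e es c d -> a <> c -> a <> d -> b <> c -> b <> d ->
  inJ e es a c \/ inJ e es a d \/ inJ e es b c \/ inJ e es b d.
Proof.
move=> Jab Jcd Hac Had Hbc Hbd.
case: (completeness e_sym e_irr Jab) => U1 [HU1 Hs1].
case: (completeness e_sym e_irr Jcd) => U2 [HU2 Hs2].
have Hsnd := soundness es_edges.
have Hs0 : sub [::] es by [].
have HGac : e a c -> inJ e es a c.
  by move=> H; apply: (Hsnd _ _ [::]) => //; exists a.
case: (scan e_sym HU2 (pre:=[::]) (y:=a) (erefl a) HU1 Hs1 Hs2) => [Hdisj|[W [HW [H|H]]]].
2: by left; exact: Hsnd H HW.
2: by right; left; exact: Hsnd H HW.
case: (walk_head e_sym HU1) => p1 [Hap1 [H1 [V1 [HV1 Hpw1]]]].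
case: (walk_head e_sym HU2) => q1 [Hcq1 [H2 [V2 [HV2 Hpw2]]]].
have HJad : e a q1 -> inJ e es a d by move=> H; exact: Hsnd (H2 _ H) Hs2.
case: (eqVneq a q1) => [Eaq|Naq].
  by left; apply: HGac; rewrite Eaq e_sym.
case: (eqVneq p1 c) => [Epc|Npc].
  by left; apply: HGac; rewrite -Epc.
case: (eqVneq p1 q1) => [Epq|Npq].
  by right; left; apply: HJad; rewrite -Epq.
case Eac: (e a c); first by left; apply: HGac.
case Eaq1: (e a q1); first by right; left; apply: HJad.
case Epc': (e p1 c).
  right; right; left; apply: inJ_sym; apply: (Hsnd _ _ U1) => //.
  by apply: H1; rewrite e_sym.
case Epq': (e p1 q1).
  right; right; right; apply: (Hsnd _ _ (V1 ++ U2)).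
    apply/walk_cat; exists p1; split => //; exact: H2.
  apply: sub_le Hdisj => p; rewrite !count_cat /= (permP HV1).
  by rewrite leqnn.
exfalso; apply: (G_gap_free a p1 c q1); split => //.
  by split; [exact: Hac | exact/eqP | exact/eqP | exact/eqP].
by split; rewrite ?Eac ?Eaq1 ?Epc' ?Epq'.
Qed.


Unset Implicit Arguments.
Theorem lemma6p14 (T : finType) (e : rel T)
  (e_sym : symmetric e) (e_irr : irreflexive e)
  (G_gap_free : gap_free (fun u v : T => e u v))
  (es : seq (T * T)) (s_ge1 : (0 < size es)%N) (es_edges : all_edges e es) :
  gap_free (Gpol_edge e es).
Proof.
have Hcore := core e_sym e_irr G_gap_free es_edges.
have Hsym := @inJ_sym T e es.
move=> u v x y [Huv Hxy [D1 D2 D3 D4] [N1 N2 N3 N4]].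
case: u Huv D1 D2 N1 N2 => [a|a] Huv D1 D2 N1 N2;
case: v Huv D3 D4 N3 N4 => [b|b] Huv D3 D4 N3 N4;
case: x Hxy D1 D3 N1 N3 => [c|c] Hxy D1 D3 N1 N3;
case: y Hxy D2 D4 N2 N4 => [d|d] Hxy D2 D4 N2 N4;
rewrite /Gpol_edge in Huv Hxy N1 N2 N3 N4;
try contradiction;
case: Huv => Huv1 Huv2; case: Hxy => Hxy1 Hxy2;
try subst;
(have [H|[H|[H|H]]] := Hcore _ _ _ _ Huv2 Hxy2
   ltac:(move=> E; subst; congruence) ltac:(move=> E; subst; congruence)
   ltac:(move=> E; subst; congruence) ltac:(move=> E; subst; congruence));
first [ apply: N1; split; [congruence | first [exact: H | exact: Hsym _ _ H]]
      | apply: N2; split; [congruence | first [exact: H | exact: Hsym _ _ H]]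
      | apply: N3; split; [congruence | first [exact: H | exact: Hsym _ _ H]]
      | apply: N4; split; [congruence | first [exact: H | exact: Hsym _ _ H]] ].
Qed.
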